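(* Let $M$ be a known finite-horizon reward-free MDP, $\Pi\subseteq\Pi_{\mathrm{RNS}}$, $\varepsilon\in[0,1]$ and $h\in[H]$. Consider the procedure: set $T=\varepsilon^{-1}$; for $t=1,\dots,T$ compute $\pi^{(t)}\in\Pi$ with $$\mathbb{E}^{M,\pi^{(t)}}\Big[\frac{P^M_{h-1}(x_h\mid x_{h-1},a_{h-1})}{\sum_{i<t}d^{M,\pi^{(i)}}_h(x_h)+P^M_{h-1}(x_h\mid x_{h-1},a_{h-1})}\Big]\ge\sup_{\pi\in\Pi}\mathbb{E}^{M,\pi}\Big[\frac{P^M_{h-1}(x_h\mid x_{h-1},a_{h-1})}{\sum_{i<t}d^{M,\pi^{(i)}}_h(x_h)+P^M_{h-1}(x_h\mid x_{h-1},a_{h-1})}\Big]-\varepsilon_{\mathrm{opt}},$$ and return $p=\mathrm{Unif}(\pi^{(1)},\dots,\pi^{(T)})$. Whenever $\varepsilon_{\mathrm{opt}}\le C^M_{\mathrm{push};h}\cdot\varepsilon\log(2\varepsilon^{-1})$, the output $p\in\Delta(\Pi)$ satisfies $|\mathrm{supp}(p)|\le\varepsilon^{-1}$ and $$\Psi^M_{\mathrm{push};h,\varepsilon}(p)\le 5C^M_{\mathrm{push};h}\log(2\varepsilon^{-1}).$$ Consequently, if $p'$ is the distribution induced by sampling $\pi\sim p$ and executing $\pi\circ_h\pi_{\mathrm{unif}}$, then $\Psi^M_{h,\varepsilon}(p')\le 5|\mathcal{A}|C^M_{\mathrm{push};h}\log(2\varepsilon^{-1})$.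
   Context: Episodic reward-free MDP $M$ (countable states $\mathcal{X}$, actions $\mathcal{A}$, horizon $H$, transitions $P^M_h$). $\Pi_{\mathrm{RNS}}$: randomized non-stationary policies; $\pi_{\mathrm{unif}}$: uniform policy; $\pi\circ_h\pi'$ follows $\pi$ at layers $<h$ and $\pi'$ at layers $\ge h$. $d^{M,\pi}_h(x)$, $d^{M,\pi}_h(x,a)$: layer-$h$ occupancies; $d^{M,p}_h=\mathbb{E}_{\pi\sim p}d^{M,\pi}_h$. Definitions: $\Psi^M_{h,\varepsilon}(p)=\sup_{\pi\in\Pi}\mathbb{E}^{M,\pi}\big[\frac{d^{M,\pi}_h(x_h,a_h)}{d^{M,p}_h(x_h,a_h)+\varepsilon d^{M,\pi}_h(x_h,a_h)}\big]$; $\Psi^M_{\mathrm{push};h,\varepsilon}(p)=\sup_{\pi\in\Pi}\mathbb{E}^{M,\pi}\big[\frac{P^M_{h-1}(x_h\mid x_{h-1},a_{h-1})}{d^{M,p}_h(x_h)+\varepsilon P^M_{h-1}(x_h\mid x_{h-1},a_{h-1})}\big]$; $C^M_{\mathrm{push};h}=\inf_{\mu\in\Delta(\mathcal{X})}\sup_{(x,a,x')}\frac{P^M_{h-1}(x'\mid x,a)}{\mu(x')}$. *)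

(* Defs.v *)
From HB Require Import structures.
From mathcomp Require Import all_boot all_order all_algebra.
From mathcomp Require Import all_classical all_reals all_analysis.
Set Implicit Arguments. Unset Strict Implicit. Unset Printing Implicit Defensive.
Import Order.TTheory GRing.Theory Num.Theory.
Local Open Scope classical_set_scope.
Local Open Scope ring_scope.
Local Open Scope ereal_scope.

(* Layers are numbered 1, 2, ....  [init] is the law of x_1 and
   [trans h x a x'] = P_h(x' | x, a) is the transition from layer h to h+1
   (h >= 1).  Convention: P_0(x' | x, a) := init x' (for all x, a). *)
Record mdp (R : realType) (X : countType) (A : finType) := MDP {
  init : X -> R;
  trans : nat -> X -> A -> X -> R }.

Section Defs.
Variables (R : realType) (X : countType) (A : finType).

Definition is_dist (mu : X -> R) : Prop :=
  (forall x, (0 <= mu x)%R) /\ \esum_(x in [set: X]) (mu x)%:E = 1.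

Definition is_mdp (M : mdp R X A) : Prop :=
  is_dist (init M) /\ forall h x a, is_dist (trans M h x a).

(* randomized non-stationary (Markov) policy: pi h x a = pi_h(a | x) *)
Definition policy := nat -> X -> A -> R.

Definition is_policy (pi : policy) : Prop :=
  forall h x, (forall a, (0 <= pi h x a)%R) /\ (\sum_(a : A) pi h x a = 1)%R.

Variable M : mdp R X A.

Definition Pprev (h : nat) (x : X) (a : A) (x' : X) : R :=
  match h with
  | 0 => 0%R
  | S k => if k is S _ then trans M k x a x' else init M x'
  end.

Fixpoint occ (pi : policy) (h : nat) (x : X) : \bar R :=
  match h with
  | 0 => 0
  | S k => if k is S _ then
             \esum_(y in [set: X]) \sum_(a : A)
                occ pi k y * (pi k y a)%:E * (trans M k y a x)%:E
           else (init M x)%:E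
  end.

Definition occa (pi : policy) (h : nat) (x : X) (a : A) : \bar R :=
  occ pi h x * (pi h x a)%:E.

(* E^{M,pi}[ g(x_h, P_{h-1}(x_h | x_{h-1}, a_{h-1})) ] *)
Definition Epush (pi : policy) (h : nat) (g : X -> R -> \bar R) : \bar R :=
  match h with
  | 0 => 0
  | S k => if k is S _ then
             \esum_(y in [set: X]) \sum_(a : A) occ pi k y * (pi k y a)%:E *
               \esum_(x' in [set: X]) (trans M k y a x')%:E * g x' (trans M k y a x')
           else \esum_(x' in [set: X]) (init M x')%:E * g x' (init M x')
  end.

(* finitely supported distributions over policies, as weighted lists *)
Definition mixture := seq (R * policy).

Definition dmix (p : mixture) (h : nat) (x : X) : \bar R :=
  \sum_(wp <- p) (wp.1)%:E * occ wp.2 h x.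

Definition dmixa (p : mixture) (h : nat) (x : X) (a : A) : \bar R :=
  \sum_(wp <- p) (wp.1)%:E * occa wp.2 h x a.

Definition supp (p : mixture) : set policy :=
  [set pi | (0 < \sum_(wp <- p) (if `[< wp.2 = pi >] then wp.1 else 0))%R].

Definition Psi (Pi : set policy) (h : nat) (eps : R) (p : mixture) : \bar R :=
  ereal_sup [set \esum_(x in [set: X]) \sum_(a : A)
                  occa pi h x a * (occa pi h x a / (dmixa p h x a + eps%:E * occa pi h x a))
            | pi in Pi].

Definition Psi_push (Pi : set policy) (h : nat) (eps : R) (p : mixture) : \bar R :=
  ereal_sup [set Epush pi h (fun x q => q%:E / (dmix p h x + (eps * q)%:E)) | pi in Pi].

Definition Cpush (h : nat) : \bar R :=
  ereal_inf [set ereal_sup [set (Pprev h t.1.1 t.1.2 t.2)%:E / (mu t.2)%:E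
                           | t in [set: (X * A * X)%type]]
            | mu in [set mu | is_dist mu]].

Definition compose (pi pi' : policy) (h : nat) : policy :=
  fun l => if (l < h)%N then pi l else pi' l.

Definition pi_unif : policy := fun _ _ _ => (#|A|%:R)^-1%R.

Definition unif_mix (pis : nat -> policy) (T : nat) : mixture :=
  [seq (((T%:R)^-1)%R, pis t) | t <- iota 1 T].

Definition mix_unif_after (p : mixture) (h : nat) : mixture :=
  [seq (wp.1, compose wp.2 pi_unif h) | wp <- p].

Definition round_obj (pis : nat -> policy) (h t : nat) : X -> R -> \bar R :=
  fun x q => q%:E / (\sum_(1 <= i < t) occ (pis i) h x + q%:E).

End Defs.

(* Main.v *)
Require Import Defs.
From HB Require Import structures.
From mathcomp Require Import all_boot all_order all_algebra.
From mathcomp Require Import all_classical all_reals all_analysis.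
From mathcomp Require Import ring lra.
Import Order.TTheory GRing.Theory Num.Theory.
Local Open Scope classical_set_scope.
Local Open Scope ring_scope.
Local Open Scope ereal_scope.
Set Implicit Arguments. Unset Strict Implicit. Unset Printing Implicit Defensive.
Section Gen.
Variable R : realType.

Lemma ediv_fin (r s : R) : (0 <= r)%R -> (0 <= s)%R -> (s = 0 -> r = 0)%R ->
  r%:E / s%:E = (r / s)%:E.
Proof.
move=> r0 s0 sr; have [s00|sn0] := eqVneq s 0%R.
  by rewrite (sr s00) s00 inve0 mul0r mul0e.
by rewrite inver (negPf sn0) -EFinM.
Qed.

Lemma esumZl (T : choiceType) (S : set T) (r : R) (a : T -> \bar R) :
  (0 <= r)%R -> (forall i, 0 <= a i) ->
  \esum_(i in S) (r%:E * a i) = r%:E * \esum_(i in S) a i.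
Proof.
move=> r0 a0; rewrite /esum -ereal_supZl //; last first.
  by apply/set0P; exists (\sum_(x \in set0) a x); exists set0 => //; exact: fsets_set0.
congr ereal_sup; apply/seteqP; split => x /=.
  move=> [F [finF FS] <-]; exists (\sum_(x \in F) a x); first by exists F.
  by rewrite !fsbig_finite //= ge0_sume_distrr.
move=> [_ [F [finF FS] <-] <-]; exists F => //.
by rewrite !fsbig_finite //= ge0_sume_distrr.
Qed.

Lemma esumZr (T : choiceType) (S : set T) (r : R) (a : T -> \bar R) :
  (0 <= r)%R -> (forall i, 0 <= a i) ->
  \esum_(i in S) (a i * r%:E) = (\esum_(i in S) a i) * r%:E.
Proof.
move=> r0 a0; rewrite muleC -esumZl //; by apply: eq_esum => i _ /=; rewrite muleC.
Qed.

Lemma esum_swap (T1 T2 : choiceType) (S1 : set T1) (S2 : set T2)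
  (f : T1 -> T2 -> \bar R) : (forall x y, 0 <= f x y) ->
  \esum_(x in S1) \esum_(y in S2) f x y = \esum_(y in S2) \esum_(x in S1) f x y.
Proof.
move=> f0; rewrite (esum_esum (J := fun=> S2)) //.
rewrite (esum_esum (J := fun=> S1)) //.
rewrite (reindex_esum (S2 `*`` fun=> S1) _ (fun x => (x.2, x.1))) //; split => //=.
- by move=> [i j] [/=].
- by move=> [i1 i2] [j1 j2] /= _ _ [] -> ->.
- by move=> [i1 i2] [Pi1 Qi2] /=; exists (i2, i1).
Qed.

Lemma le_esumT (T : choiceType) (a : T -> \bar R) t :
  (forall i, 0 <= a i) -> a t <= \esum_(i in [set: T]) a i.
Proof.
move=> a0; apply: esum_ge; exists [set t]; first by split => //; exact: finite_set1.
by rewrite fsbig_set1.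
Qed.

End Gen.
Section RealLemmas.
Variable R : realType.
Local Open Scope ring_scope.

Lemma frac_mono (D q c : R) : 0 <= D -> 0 <= q -> q <= c -> q / (D + q) <= c / (D + c).
Proof.
move=> D0 q0 qc; have [->|qn0] := eqVneq q 0.
  by rewrite mul0r divr_ge0 // ?addr_ge0 //; lra.
have qp : 0 < q by rewrite lt0r qn0.
have Dq : 0 < D + q by lra.
have Dc : 0 < D + c by lra.
rewrite ler_pdivrMr // mulrAC ler_pdivlMr //; nra.
Qed.

Lemma frac_anti (D D' q : R) : 0 <= D -> D <= D' -> 0 <= q -> q / (D' + q) <= q / (D + q).
Proof.
move=> D0 DD q0; have [->|qn0] := eqVneq q 0; first by rewrite !mul0r.
have qp : 0 < q by rewrite lt0r qn0.
have Dq : 0 < D + q by lra.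
have Dq' : 0 < D' + q by lra.
rewrite ler_pdivrMr // mulrAC ler_pdivlMr //; nra.
Qed.

Lemma frac_le1 (D q : R) : 0 <= D -> 0 <= q -> q / (D + q) <= 1.
Proof.
move=> D0 q0; have [->|qn0] := eqVneq q 0; first by rewrite !mul0r.
have qp : 0 < q by rewrite lt0r qn0.
have Dq : 0 < D + q by lra.
rewrite ler_pdivrMr //; lra.
Qed.

Lemma frac_ge0 (D q : R) : 0 <= D -> 0 <= q -> 0 <= q / (D + q).
Proof. by move=> D0 q0; rewrite divr_ge0 // addr_ge0. Qed.

Lemma ln_half (u : R) : 0 <= u <= 1 -> u <= 2 * ln (1 + u).
Proof.
move=> /andP[u0 u1].
have E0 := expR_gt0 (u / 2).
have h1 := expR_ge1Dx (- (u / 2)).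
rewrite expRN in h1.
have h2 : expR (u / 2) * (1 - u / 2) <= 1.
  have : expR (u/2) * (1 + - (u/2)) <= expR (u/2) * (expR (u / 2))^-1.
    by apply: ler_wpM2l => //; exact: ltW.
  by rewrite mulfV ?gt_eqF.
have h3 : expR (u / 2) <= 1 + u by nra.
have : ln (expR (u / 2)) <= ln (1 + u).
  by rewrite ler_ln // posrE; lra.
rewrite expRK; lra.
Qed.

Lemma potential (c : R) (d : nat -> R) (n : nat) :
  0 <= c -> (forall t, 0 <= d t <= c) ->
  \sum_(1 <= t < n.+1) d t * (c / (\sum_(1 <= i < t) d i + c))
    <= 2 * c * ln (1 + n%:R).
Proof.
move=> c0 dc; have [->|cn0] := eqVneq c 0.
  by rewrite mulr0 mul0r big1 // => t _; rewrite mul0r mulr0.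
have cp : 0 < c by rewrite lt0r cn0.
pose Ds t := \sum_(1 <= i < t) d i.
have Ds0 t : 0 <= Ds t by apply: sumr_ge0 => i _; case/andP: (dc i).
have key : \sum_(1 <= t < n.+1) d t * (c / (Ds t + c))
    <= 2 * c * (ln (Ds n.+1 + c) - ln c).
  elim: n => [|n IH].
    by rewrite big_geq // /Ds big_geq // add0r subrr mulr0.
  rewrite big_nat_recr //=.
  have -> : Ds n.+2 = Ds n.+1 + d n.+1 by rewrite /Ds big_nat_recr.
  set D := Ds n.+1 in IH *.
  have D0 : 0 <= D := Ds0 _.
  case/andP: (dc n.+1) => d0 d1.
  have Dc : 0 < D + c by lra.
  suff : d n.+1 * (c / (D + c)) <= 2 * c * (ln (D + d n.+1 + c) - ln (D + c)) by lra.
  have -> : ln (D + d n.+1 + c) - ln (D + c) = ln (1 + d n.+1 / (D + c)).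
    rewrite -ln_div ?posrE; try lra.
    congr ln; field; lra.
  have : d n.+1 / (D + c) <= 2 * ln (1 + d n.+1 / (D + c)).
    apply: ln_half; apply/andP; split; first by rewrite divr_ge0 //; lra.
    rewrite ler_pdivrMr //; lra.
  move=> h; rewrite mulrCA (mulrC 2) -mulrA; apply: ler_wpM2l => //; lra.
apply: (le_trans key); rewrite -!mulrA; apply: ler_wpM2l; first lra.
apply: ler_wpM2l; first lra.
have Dn : Ds n.+1 <= n%:R * c.
  apply: (@le_trans _ _ (\sum_(1 <= i < n.+1) c)).
    by apply: ler_sum_nat => i _; case/andP: (dc i).
  by rewrite sumr_const_nat subn1 /= mulr_natl.
rewrite -ln_div ?posrE; try lra; last by have := Ds0 n.+1; lra.
rewrite ler_ln ?posrE; first last.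
- by rewrite ltr_pwDl // ler0n.
- by apply: divr_gt0 => //; have := Ds0 n.+1; lra.
rewrite ler_pdivrMr //; nra.
Qed.

End RealLemmas.

Lemma potential' (R : realType) (c : R) (d : nat -> R) (n : nat) :
  (0 <= c)%R -> (forall t, (0 < t <= n)%N -> (0 <= d t <= c)%R) ->
  (\sum_(1 <= t < n.+1) d t * (c / (\sum_(1 <= i < t) d i + c))
    <= 2 * c * ln (1 + n%:R))%R.
Proof.
move=> c0 dc.
pose d' t := if (0 < t <= n)%N then d t else 0%R.
have := @potential R c d' n c0.
have H : forall t, (0 <= d' t <= c)%R.
  by move=> t; rewrite /d'; case: ifP => [/dc//|_]; rewrite lexx c0.
move/(_ H); congr (_ <= _)%R; apply: eq_big_nat => t /andP[t1 tn].
rewrite /d' ifT; last by rewrite t1 -ltnS.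
congr (_ * (_ / (_ + _)))%R; apply: eq_big_nat => i /andP[i1 it].
by rewrite ifT // i1 -ltnS (ltn_trans it).
Qed.
Section Frame.
Variables (R : realType) (X : countType) (A : finType) (J : choiceType).
Variable (S : set J).

Definition Sig (f : J -> A -> R) : \bar R :=
  \esum_(j in S) \sum_(a : A) (f j a)%:E.

Lemma Sig_ge0 f : (forall j a, (0 <= f j a)%R) -> 0 <= Sig f.
Proof. by move=> f0; apply: esum_ge0 => j _; apply: sume_ge0 => a _; rewrite lee_fin. Qed.

Lemma Sig_le f g : (forall j a, (f j a <= g j a)%R) -> Sig f <= Sig g.
Proof. by move=> fg; apply: le_esum => j _; apply: lee_sum => a _; rewrite lee_fin. Qed.

Lemma SigD f g : (forall j a, (0 <= f j a)%R) -> (forall j a, (0 <= g j a)%R) ->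
  Sig (fun j a => f j a + g j a)%R = Sig f + Sig g.
Proof.
move=> f0 g0; rewrite /Sig -esumD; last 2 first.
- by move=> j _; apply: sume_ge0 => a _; rewrite lee_fin.
- by move=> j _; apply: sume_ge0 => a _; rewrite lee_fin.
by apply: eq_esum => j _; rewrite -big_split /=; apply: eq_bigr => a _; rewrite EFinD.
Qed.

Lemma SigZ (c : R) f : (0 <= c)%R -> (forall j a, (0 <= f j a)%R) ->
  Sig (fun j a => c * f j a)%R = c%:E * Sig f.
Proof.
move=> c0 f0; rewrite /Sig -esumZl //; last first.
  by move=> j; apply: sume_ge0 => a _; rewrite lee_fin.
apply: eq_esum => j _; rewrite ge0_sume_distrr; last by move=> a _; rewrite lee_fin.
by apply: eq_bigr => a _; rewrite EFinM.
Qed.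

Variable K : J -> A -> X -> R.
Hypothesis K0 : forall j a x, (0 <= K j a x)%R.

Definition dd (w : J -> A -> R) (x : X) : \bar R := Sig (fun j a => w j a * K j a x)%R.

Definition EP (w : J -> A -> R) (g : X -> R -> \bar R) : \bar R :=
  \esum_(j in S) \sum_(a : A) (w j a)%:E *
     \esum_(x in [set: X]) (K j a x)%:E * g x (K j a x).

Variable w : J -> A -> R.
Hypothesis w0 : forall j a, (0 <= w j a)%R.
Hypothesis wmass : Sig w <= 1.

Lemma EPswap g : (forall x q, (0 <= q)%R -> 0 <= g x q) ->
  EP w g = \esum_(x in [set: X]) \esum_(j in S) \sum_(a : A)
              (w j a * K j a x)%:E * g x (K j a x).
Proof.
move=> g0; rewrite /EP.
have gK0 j a x : 0 <= (K j a x)%:E * g x (K j a x) by rewrite mule_ge0 // ?lee_fin ?g0.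
transitivity (\esum_(j in S) \esum_(x in [set: X]) \sum_(a : A)
              (w j a * K j a x)%:E * g x (K j a x)); last first.
  by apply: esum_swap => j x; apply: sume_ge0 => a _; rewrite EFinM -muleA mule_ge0 ?lee_fin.
apply: eq_esum => j _; rewrite esum_sum; last first.
  by move=> x a _ _; rewrite EFinM -muleA mule_ge0 ?lee_fin.
apply: eq_bigr => a _; rewrite -esumZl //.
by apply: eq_esum => x _; rewrite EFinM muleA.
Qed.

Lemma EP_mono g1 g2 : (forall x q, (0 <= q)%R -> g1 x q <= g2 x q) ->
  EP w g1 <= EP w g2.
Proof.
move=> g12; apply: le_esum => j _; apply: lee_sum => a _.
apply: lee_wpmul2l; first by rewrite lee_fin.
by apply: le_esum => x _; apply: lee_wpmul2l; rewrite ?lee_fin ?g12.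
Qed.

Lemma EP_ext g1 g2 : (forall x q, (0 <= q)%R -> g1 x q = g2 x q) ->
  EP w g1 = EP w g2.
Proof. by move=> e; apply/eqP; rewrite eq_le !EP_mono // => x q q0; rewrite e. Qed.

Lemma EP_scale (c : R) g : (0 <= c)%R -> (forall x q, (0 <= q)%R -> 0 <= g x q) ->
  EP w (fun x q => c%:E * g x q) = c%:E * EP w g.
Proof.
move=> c0 g0; rewrite !EPswap //; last by move=> x q q0; rewrite mule_ge0 ?lee_fin ?g0.
rewrite -esumZl //; last first.
  move=> x; apply: esum_ge0 => j _; apply: sume_ge0 => a _.
  by rewrite mule_ge0 ?lee_fin ?g0 ?mulr_ge0.
apply: eq_esum => x _; rewrite -esumZl //; last first.
  by move=> j; apply: sume_ge0 => a _; rewrite mule_ge0 ?lee_fin ?g0 ?mulr_ge0.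
apply: eq_esum => j _; rewrite ge0_sume_distrr; last first.
  by move=> a _; rewrite mule_ge0 ?lee_fin ?g0 ?mulr_ge0.
by apply: eq_bigr => a _; rewrite muleCA.
Qed.

Lemma dd_le x (c : R) : (0 <= c)%R -> (forall j a, S j -> (K j a x <= c)%R) ->
  dd w x <= c%:E.
Proof.
move=> c0 Kc; apply: (@le_trans _ _ (Sig (fun j a => w j a * c)%R)).
  apply: le_esum => j Sj; apply: lee_sum => a _; rewrite lee_fin.
  by apply: ler_wpM2l => //; exact: Kc.
rewrite /Sig; under eq_esum do under eq_bigr do rewrite EFinM.
rewrite (eq_esum (b := fun j => (\sum_(a : A) (w j a)%:E) * c%:E)); last first.
  by move=> j _; rewrite ge0_sume_distrl // => a _; rewrite lee_fin.
rewrite esumZr //; last by move=> j; apply: sume_ge0 => a _; rewrite lee_fin.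
by rewrite -[leRHS]mul1e; apply: lee_wpmul2r; rewrite ?lee_fin.
Qed.

Lemma dd_ge0 x : 0 <= dd w x.
Proof. by apply: Sig_ge0 => j a; rewrite mulr_ge0. Qed.

Lemma EP_upper g (G : X -> R) : (forall x, (0 <= G x)%R) ->
  (forall x q, (0 <= q)%R -> 0 <= g x q) ->
  (forall j a x, S j -> g x (K j a x) <= (G x)%:E) ->
  EP w g <= \esum_(x in [set: X]) dd w x * (G x)%:E.
Proof.
move=> G0 g0 gG; rewrite EPswap //; apply: le_esum => x _.
rewrite /dd /Sig -esumZr //; last by move=> j; apply: sume_ge0 => a _; rewrite lee_fin mulr_ge0.
apply: le_esum => j Sj; rewrite ge0_sume_distrl; last by move=> a _; rewrite lee_fin mulr_ge0.
apply: lee_sum => a _; apply: lee_wpmul2l; rewrite ?lee_fin ?mulr_ge0 //.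
exact: gG.
Qed.

End Frame.
Lemma amgm (R : realType) (w K D l : R) : (0 <= w -> 0 <= K -> 0 <= D -> 0 < l ->
  2 * (w * K) <= l * (w * K * (K / (D + K))) + ((D / l) * w + l^-1 * (w * K)))%R.
Proof.
move=> w0 K0 D0 l0.
suff h : (2 * K <= l * (K * (K / (D + K))) + (D / l + K / l))%R.
  have := ler_wpM2l w0 h; rewrite !mulrDr.
  have -> : (w * (2 * K) = 2 * (w * K))%R by ring.
  have -> : (w * (l * (K * (K / (D + K)))) = l * (w * K * (K / (D + K))))%R by ring.
  have -> : (w * (D / l) = D / l * w)%R by ring.
  have -> : (w * (K / l) = l^-1 * (w * K))%R by ring.
  by [].
have [->|Kn0] := eqVneq K 0%R.
  rewrite !(mul0r, mulr0, addr0, add0r); apply: divr_ge0 => //; exact: ltW.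
have Kp : (0 < K)%R by rewrite lt0r Kn0.
have p0 : (0 < D + K)%R by lra.
have e : ((l * K - (D + K)) ^+ 2 / (l * (D + K)) =
          l * (K * (K / (D + K))) + (D / l + K / l) - 2 * K)%R.
  by field; apply/andP; split; rewrite gt_eqF.
have : (0 <= (l * K - (D + K)) ^+ 2 / (l * (D + K)))%R.
  by rewrite divr_ge0 ?sqr_ge0 // mulr_ge0 // ltW.
rewrite e; lra.
Qed.

Section Jensen.
Variables (R : realType) (X : countType) (A : finType) (J : choiceType).
Variable (S : set J).
Variable K : J -> A -> X -> R.
Hypothesis K0 : forall j a x, (0 <= K j a x)%R.
Variable w : J -> A -> R.
Hypothesis w0 : forall j a, (0 <= w j a)%R.
Hypothesis wmass : Sig S w <= 1.

Lemma jensen x (D : R) : (0 <= D)%R -> dd S K w x \is a fin_num ->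
  ((fine (dd S K w x)) ^+ 2 / (D + fine (dd S K w x)))%:E
    <= Sig S (fun j a => w j a * K j a x * (K j a x / (D + K j a x)))%R.
Proof.
move=> D0 ddfin.
set o := fine (dd S K w x).
have ddE : dd S K w x = o%:E by rewrite fineK.
have o0 : (0 <= o)%R by rewrite -lee_fin -ddE dd_ge0.
set F := (fun j a => w j a * K j a x * (K j a x / (D + K j a x)))%R.
have F0 j a : (0 <= F j a)%R.
  by rewrite /F !mulr_ge0 // invr_ge0 addr_ge0.
have Sx0 : 0 <= Sig S F by apply: Sig_ge0.
have [->|on0] := eqVneq o 0%R.
  by rewrite expr0n /= mul0r.
have op : (0 < o)%R by rewrite lt0r on0.
set l := ((D + o) / o)%R.
have lp : (0 < l)%R by rewrite divr_gt0 //; lra.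
have wK0 j a : (0 <= w j a * K j a x)%R by rewrite mulr_ge0.
have lV0 : (0 <= l^-1)%R by rewrite invr_ge0 ltW.
have Dl0 : (0 <= D / l)%R by rewrite divr_ge0 // ltW.
have eL : Sig S (fun j a => 2 * (w j a * K j a x))%R = (2 * o)%:E.
  rewrite SigZ //; change (Sig S _) with (dd S K w x); by rewrite ddE -EFinM.
have eR : Sig S (fun j a => l * F j a + ((D / l) * w j a + l^-1 * (w j a * K j a x)))%R
   = l%:E * Sig S F + ((D / l)%:E * Sig S w + (l^-1)%:E * o%:E).
  rewrite SigD //; last first.
    by move=> j a; rewrite addr_ge0 // mulr_ge0.
    by move=> j a; rewrite mulr_ge0 // ltW.
  rewrite SigZ //; last exact: ltW.
  rewrite SigD //; last 2 first.
    by move=> j a; rewrite mulr_ge0.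
    by move=> j a; rewrite mulr_ge0.
  by rewrite SigZ // SigZ // -ddE.
have h1 : (2 * o)%:E <= l%:E * Sig S F + ((D / l)%:E * Sig S w + (l^-1)%:E * (o%:E)).
  by rewrite -eL -eR; apply: Sig_le => j a; apply: amgm => //; exact: ltW.
have h2 : (D / l)%:E * Sig S w <= (D / l)%:E.
  by rewrite -[leRHS]mule1; apply: lee_wpmul2l; rewrite // lee_fin.
move: Sx0 h1; case: (Sig S F) => [s| |]; [| by move=> *; rewrite leey | by []].
rewrite lee_fin => s0 h1.
have h3 : (2 * o <= l * s + (D / l + l^-1 * o))%R.
  rewrite -lee_fin; apply: (le_trans h1); rewrite !EFinD !EFinM leeD2l //.
  by rewrite leeD2r // -EFinM.
have e : (D / l + l^-1 * o = o)%R.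
  by rewrite /l; field; apply/andP; split; rewrite gt_eqF //; lra.
rewrite e in h3.
have h4 : (o <= l * s)%R by lra.
rewrite lee_fin.
have -> : (o ^+ 2 / (D + o) = o / l)%R.
  by rewrite /l; field; apply/andP; split; rewrite gt_eqF //; lra.
by rewrite ler_pdivrMr // mulrC.
Qed.

End Jensen.
Section MDPfacts.
Variables (R : realType) (X : countType) (A : finType) (M : mdp R X A).
Hypothesis HM : is_mdp M.

Lemma dist_le1 (mu : X -> R) x : is_dist mu -> (0 <= mu x <= 1)%R.
Proof.
move=> [mu0 mu1]; rewrite mu0 /= -lee_fin -mu1.
by apply: (le_esumT (a := fun x => (mu x)%:E)) => y; rewrite lee_fin.
Qed.

Lemma init_b x : (0 <= init M x <= 1)%R.
Proof. by apply: dist_le1; case: HM. Qed.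

Lemma trans_b k y a x : (0 <= trans M k y a x <= 1)%R.
Proof. by apply: dist_le1; case: HM. Qed.

Lemma policy_b (pi : policy R X A) k x a : is_policy pi -> (0 <= pi k x a <= 1)%R.
Proof.
move=> /(_ k x) [p0 p1]; rewrite p0 /= -p1.
rewrite (bigD1 a) //= lerDl; exact: sumr_ge0.
Qed.

Lemma occSS (pi : policy R X A) k x : occ M pi k.+2 x =
  \esum_(y in [set: X]) \sum_(a : A)
     occ M pi k.+1 y * (pi k.+1 y a)%:E * (trans M k.+1 y a x)%:E.
Proof. by []. Qed.

Lemma occ_props (pi : policy R X A) k : is_policy pi ->
  (forall x, 0 <= occ M pi k x) /\ \esum_(x in [set: X]) occ M pi k x <= 1.
Proof.
move=> Hpi; elim: k => [|k IH].
  by split => //=; rewrite esum1.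
case: k IH => [|k] [IH0 IH1].
  split => [x|] /=; first by rewrite lee_fin; case/andP: (init_b x).
  by case: HM => -[_ ->].
have fin y : occ M pi k.+1 y = (fine (occ M pi k.+1 y))%:E.
  rewrite fineK //; apply/fin_numP; split.
    by apply/negP => /eqP e; have := IH0 y; rewrite e.
  apply/negP => /eqP e; have := le_esumT y IH0; rewrite e leye_eq => /eqP e2.
  by move: IH1; rewrite e2.
have f0 y : (0 <= fine (occ M pi k.+1 y))%R by rewrite -lee_fin -fin.
have term0 y a x : 0 <= occ M pi k.+1 y * (pi k.+1 y a)%:E * (trans M k.+1 y a x)%:E.
  rewrite fin -!EFinM lee_fin !mulr_ge0 //.
  by case/andP: (policy_b k.+1 y a Hpi).
  by case/andP: (trans_b k.+1 y a x).
split => [x|].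
  rewrite occSS; by apply: esum_ge0 => y _; apply: sume_ge0 => a _; exact: term0.
under eq_esum do rewrite occSS.
rewrite esum_swap; last by move=> x y; apply: sume_ge0 => a _; exact: term0.
apply: le_trans IH1; apply: le_esum => y _.
rewrite esum_sum; last by move=> x a _ _; exact: term0.
rewrite (eq_bigr (fun a => (fine (occ M pi k.+1 y) * pi k.+1 y a)%:E)).
  by rewrite sumEFin -mulr_sumr (proj2 (Hpi k.+1 y)) mulr1 -fin.
move=> a _; rewrite {1}fin -EFinM.
under eq_esum do rewrite EFinM.
rewrite esumZl //.
- by case: HM => _ /(_ k.+1 y a) [_ ->]; rewrite mule1.
- by rewrite mulr_ge0 //; case/andP: (policy_b k.+1 y a Hpi).
- by move=> x; rewrite lee_fin; case/andP: (trans_b k.+1 y a x).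
Qed.

Definition ocr (pi : policy R X A) k x : R := fine (occ M pi k x).

Lemma occE (pi : policy R X A) k x : is_policy pi ->
  occ M pi k x = (ocr pi k x)%:E /\ (0 <= ocr pi k x <= 1)%R.
Proof.
move=> Hpi; have [h0 h1] := occ_props k Hpi.
have le1 : occ M pi k x <= 1 by apply: le_trans h1; exact: le_esumT.
have fin : occ M pi k x = (ocr pi k x)%:E.
  rewrite /ocr fineK //; apply/fin_numP; split.
    by apply/negP => /eqP e; have := h0 x; rewrite e.
  by apply/negP => /eqP e; move: le1; rewrite e.
by split => //; rewrite -!lee_fin -fin h0.
Qed.

End MDPfacts.
Section Reps.
Variables (R : realType) (X : countType) (A : finType) (M : mdp R X A).
Hypothesis HM : is_mdp M.

Lemma occ_compose (pi pi' : policy R X A) h k x : (k <= h)%N ->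
  occ M (compose pi pi' h) k x = occ M pi k x.
Proof.
elim: k x => [|k IH] x kh //.
case: k IH kh => [|k] IH kh //.
rewrite !occSS; apply: eq_esum => y _; apply: eq_bigr => a _.
rewrite IH; last by apply: leq_trans kh.
by rewrite /compose ifT //; apply: leq_trans kh.
Qed.

Lemma EpushSS (pi : policy R X A) k g : Epush M pi k.+2 g =
  \esum_(y in [set: X]) \sum_(a : A) occ M pi k.+1 y * (pi k.+1 y a)%:E *
     \esum_(x' in [set: X]) (trans M k.+1 y a x')%:E * g x' (trans M k.+1 y a x').
Proof. by []. Qed.

Lemma Epush1 (pi : policy R X A) g : Epush M pi 1 g =
  \esum_(x' in [set: X]) (init M x')%:E * g x' (init M x').
Proof. by []. Qed.

Section SS.
Variable k : nat.
Definition KSS : X -> A -> X -> R := fun y a x => trans M k.+1 y a x.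
Definition wSS (pi : policy R X A) : X -> A -> R := fun y a => (ocr M pi k.+1 y * pi k.+1 y a)%R.

Lemma wSS0 pi : is_policy pi -> forall y a, (0 <= wSS pi y a)%R.
Proof.
move=> Hpi y a; rewrite mulr_ge0 //.
  by case/andP: (proj2 (occE HM k.+1 y Hpi)).
by case/andP: (policy_b k.+1 y a Hpi).
Qed.

Lemma occ_repSS pi x : is_policy pi -> occ M pi k.+2 x = dd [set: X] KSS (wSS pi) x.
Proof.
move=> Hpi; rewrite occSS /dd /Sig; apply: eq_esum => y _; apply: eq_bigr => a _.
by rewrite (proj1 (occE HM k.+1 y Hpi)) -!EFinM.
Qed.

Lemma Epush_repSS pi g : is_policy pi -> Epush M pi k.+2 g = EP [set: X] KSS (wSS pi) g.
Proof.
move=> Hpi; rewrite EpushSS /EP; apply: eq_esum => y _; apply: eq_bigr => a _.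
by rewrite (proj1 (occE HM k.+1 y Hpi)) -!EFinM.
Qed.

Lemma massSS pi : is_policy pi -> Sig [set: X] (wSS pi) <= 1.
Proof.
move=> Hpi; apply: le_trans (proj2 (occ_props HM k.+1 Hpi)).
rewrite /Sig; apply: le_esum => y _.
rewrite /wSS sumEFin -mulr_sumr (proj2 (Hpi k.+1 y)) mulr1.
by rewrite (proj1 (occE HM k.+1 y Hpi)).
Qed.

End SS.

Definition K1 : unit -> A -> X -> R := fun _ _ x => init M x.
Definition w1 (pi : policy R X A) : unit -> A -> R := fun _ _ => ((#|A|%:R)^-1)%R.

Hypothesis HA : (0 < #|A|)%N.

Lemma nA_gt0 : (0 < (#|A|%:R : R))%R.
Proof. by rewrite ltr0n. Qed.

Lemma setT_unit : [set: unit] = [set tt].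
Proof. by apply/seteqP; split => // -[]. Qed.

Lemma sum_w1 : (\sum_(a : A) ((#|A|%:R : R)^-1) = 1)%R.
Proof.
rewrite sumr_const -(mulr_natr ((#|A|%:R : R)^-1)); apply: mulVf; exact: lt0r_neq0 nA_gt0.
Qed.

Lemma occ_rep1 pi x : occ M pi 1 x = dd [set: unit] K1 (w1 pi) x.
Proof.
rewrite /dd /Sig setT_unit esum_set1; last first.
  apply: sume_ge0 => a _; rewrite lee_fin mulr_ge0 ?invr_ge0 ?ler0n //.
  by case/andP: (init_b HM x).
by rewrite sumEFin -mulr_suml sum_w1 mul1r.
Qed.

Lemma Epush_rep1 pi g : (forall x q, (0 <= q)%R -> 0 <= g x q) ->
  Epush M pi 1 g = EP [set: unit] K1 (w1 pi) g.
Proof.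
move=> g0; rewrite Epush1 /EP setT_unit esum_set1; last first.
  apply: sume_ge0 => a _; apply: mule_ge0; first by rewrite lee_fin invr_ge0 ler0n.
  apply: esum_ge0 => x _; apply: mule_ge0; rewrite ?lee_fin ?g0 //;
  by case/andP: (init_b HM x).
rewrite /w1 /K1 -ge0_sume_distrl; last by move=> a _; rewrite lee_fin invr_ge0 ler0n.
by rewrite sumEFin sum_w1 mul1e.
Qed.

Lemma mass1 pi : Sig [set: unit] (w1 pi) <= 1.
Proof.
rewrite /Sig setT_unit esum_set1; last first.
  by apply: sume_ge0 => a _; rewrite lee_fin invr_ge0 ler0n.
by rewrite sumEFin sum_w1.
Qed.

End Reps.
Section PsiTerm.
Local Open Scope ring_scope.
Lemma psi_term (R : realType) (o p D Tr n : R) : (0 <= o -> 0 <= p <= 1 -> 0 <= D -> 0 < Tr -> 1 <= n ->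
  (o * p) * ((o * p) / (Tr^-1 * (D * n^-1) + Tr^-1 * (o * p)))
    <= p * (Tr * n * (o ^+ 2 / (D + o))))%R.
Proof.
move=> o0 /andP[p0 p1] D0 T0 n1.
have [op0|opn0] := eqVneq (o * p) 0%R.
  rewrite op0 mul0r; apply: mulr_ge0 => //; apply: mulr_ge0; first by apply: mulr_ge0; lra.
  by apply: divr_ge0; [exact: sqr_ge0 | lra].
have op_gt0 : (0 < o * p)%R by rewrite lt0r opn0 mulr_ge0.
have ogt0 : (0 < o)%R.
  rewrite lt0r o0 andbT; apply/eqP => e; move: opn0; by rewrite e mul0r eqxx.
have pgt0 : (0 < p)%R.
  rewrite lt0r p0 andbT; apply/eqP => e; move: opn0; by rewrite e mulr0 eqxx.
have d1 : (0 < D + n * (o * p))%R by nra.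
have d2 : (0 < D + o)%R by lra.
have e1 : ((o * p) * ((o * p) / (Tr^-1 * (D * n^-1) + Tr^-1 * (o * p)))
    = Tr * n * ((o * p) ^+ 2 / (D + n * (o * p))))%R.
  field; rewrite !gt_eqF //; lra.
have e2 : (p * (Tr * n * (o ^+ 2 / (D + o))) = Tr * n * (p * o ^+ 2 / (D + o)))%R.
  by field; rewrite gt_eqF.
rewrite e1 e2; apply: ler_wpM2l; first by apply: mulr_ge0; lra.
rewrite ler_pdivrMr // mulrAC ler_pdivlMr //.
have k : (p * (D + o) <= D + n * (o * p))%R by nra.
have k2 := ler_wpM2l (mulr_ge0 p0 (sqr_ge0 o)) k.
apply: le_trans k2; rewrite le_eqVlt; apply/orP; left; apply/eqP; ring.
Qed.
End PsiTerm.
Section Ratio.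
Variables (R : realType) (X : countType) (A : finType) (M : mdp R X A).
Hypothesis HM : is_mdp M.

Lemma from_ratio (P m c : R) : (0 <= P)%R -> (0 <= m)%R -> P%:E / m%:E < c%:E -> (P <= c * m)%R.
Proof.
move=> P0 m0; have [->|mn0] := eqVneq m 0%R.
  rewrite inve0 mulr0; have [->|Pn0] := eqVneq P 0%R; first by rewrite lexx.
  by rewrite gt0_muley ?lte_fin ?lt0r ?Pn0 //.
rewrite inver (negPf mn0) -EFinM lte_fin => lt; apply: ltW.
by rewrite -ltr_pdivrMr // lt0r mn0.
Qed.

Lemma Pprev_ge0 h y b x : (0 <= Pprev M h y b x)%R.
Proof.
case: h => [|[|k]] //=; first by case/andP: (init_b HM x).
by case/andP: (trans_b HM k.+1 y b x).
Qed.

Lemma Cpush_ge0 h (x0 : X) (a0 : A) : 0 <= Cpush M h.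
Proof.
apply: le_ereal_inf_tmp => _ [mu [mu0 _] <-].
have : (Pprev M h x0 a0 x0)%:E / (mu x0)%:E <=
   ereal_sup [set (Pprev M h t.1.1 t.1.2 t.2)%:E / (mu t.2)%:E | t in [set: (X * A * X)%type]].
  by apply: ereal_sup_ubound; exists ((x0, a0), x0).
apply: le_trans; apply: mule_ge0; first by rewrite lee_fin Pprev_ge0.
by rewrite inve_ge0 lee_fin.
Qed.

Lemma Cpush_dom h (C d : R) : Cpush M h = C%:E -> (0 < d)%R ->
  exists mu, is_dist mu /\ forall y b x, (Pprev M h y b x <= (C + d) * mu x)%R.
Proof.
move=> CE d0.
have : Cpush M h < (C + d)%:E by rewrite CE lte_fin ltrDl.
move=> /ereal_inf_lt [_ [mu mud <-] lt].
exists mu; split => // y b x.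
apply: from_ratio; first exact: Pprev_ge0.
  by case: mud => /(_ x).
apply: le_lt_trans lt; apply: ereal_sup_ubound; by exists ((y, b), x).
Qed.

End Ratio.

Section Final.
Variables (R : realType) (X : countType) (A : finType) (M : mdp R X A) (h T : nat) (eps_opt : R).
Hypothesis HT : (1 <= T)%N.
Hypothesis HMf : is_mdp M.

Lemma final_step (V : \bar R) (n : R) : (1 <= n)%R ->
  (forall c mu, (0 <= c)%R -> is_dist mu -> (forall y b x, (Pprev M h y b x <= c * mu x)%R) ->
     V <= (n * (2 * c * ln (1 + T%:R) + T%:R * eps_opt))%:E) ->
  eps_opt%:E <= Cpush M h * ((T%:R)^-1 * ln (2 / (T%:R)^-1))%:E ->
  0 <= Cpush M h ->
  V <= (5 * n * ln (2 / (T%:R)^-1))%:E * Cpush M h.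
Proof.
move=> n1 HV Heps C0.
have Tg : (0 < (T%:R : R))%R by rewrite ltr0n.
have T1 : (1 <= (T%:R : R))%R by rewrite ler1n.
have e2 : (2 / (T%:R : R)^-1 = 2 * T%:R)%R by rewrite invrK.
rewrite e2 in Heps *.
set L2 := ln (2 * (T%:R : R)).
set L1 := ln (1 + (T%:R : R)).
have L1p : (0 < L1)%R by apply: ln_gt0; lra.
have L12 : (L1 <= L2)%R by rewrite /L1 /L2 ler_ln ?posrE; lra.
move: C0 Heps; case E: (Cpush M h) => [C| |] // C0 Heps; last first.
  by rewrite gt0_muley ?leey // lte_fin !mulr_gt0 //; lra.
rewrite lee_fin in C0; rewrite -EFinM lee_fin in Heps.
have TE : (T%:R * eps_opt <= C * L2)%R.
  have := ler_wpM2l (ltW Tg) Heps.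
  have -> : ((T%:R : R) * (C * ((T%:R)^-1 * L2)) = C * L2)%R.
    by field; rewrite gt_eqF.
  by [].
apply/lee_addgt0Pr => e e0.
have dp : (0 < e / (2 * n * L1))%R by rewrite divr_gt0 // !mulr_gt0 //; lra.
have [mu [mud Pc]] := Cpush_dom HMf E dp.
have := HV _ mu (addr_ge0 C0 (ltW dp)) mud Pc.
move/le_trans; apply; rewrite -EFinM -EFinD lee_fin.
have ee : (n * (2 * (e / (2 * n * L1)) * L1) = e)%R.
  by field; rewrite !gt_eqF //; lra.
have k1 : (2 * C * L1 <= 2 * C * L2)%R by apply: ler_wpM2l => //; lra.
have k2 : (n * (2 * C * L1 + T%:R * eps_opt) <= n * (3 * C * L2))%R.
  by apply: ler_wpM2l; lra.
have k3 : (n * (3 * C * L2) <= 5 * n * L2 * C)%R.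
  have : (0 <= n * C * L2)%R by rewrite !mulr_ge0 //; lra.
  have -> : (5 * n * L2 * C = n * (3 * C * L2) + 2 * (n * C * L2))%R by ring.
  lra.
have -> : (n * (2 * (C + e / (2 * n * L1)) * L1 + T%:R * eps_opt) =
   n * (2 * C * L1 + T%:R * eps_opt) + n * (2 * (e / (2 * n * L1)) * L1))%R by ring.
rewrite ee; lra.
Qed.

End Final.
Lemma lee_sum_nat' (R : realType) (f g : nat -> \bar R) m n :
  (forall i, (m <= i < n)%N -> f i <= g i) ->
  \sum_(m <= i < n) f i <= \sum_(m <= i < n) g i.
Proof.
move=> fg; rewrite big_nat_cond [X in _ <= X]big_nat_cond.
by apply: lee_sum => i /andP[+ _]; exact: fg.
Qed.

Section Main.
Variables (R : realType) (X : countType) (A : finType) (M : mdp R X A).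
Hypothesis HM : is_mdp M.
Variables (h T : nat) (Pi : set (policy R X A)) (pis : nat -> policy R X A) (eps_opt : R).
Hypothesis HPi : forall pi, Pi pi -> is_policy pi.
Hypothesis HT : (1 <= T)%N.
Hypothesis HA : (0 < #|A|)%N.
Hypothesis Hround : forall t, (1 <= t <= T)%N ->
  Pi (pis t) /\
  Epush M (pis t) h (round_obj M pis h t) >=
    ereal_sup [set Epush M pi h (round_obj M pis h t) | pi in Pi] - eps_opt%:E.
Variables (J : choiceType) (S : set J) (K : J -> A -> X -> R)
  (wf : policy R X A -> J -> A -> R).
Hypothesis K0 : forall j a x, (0 <= K j a x)%R.
Hypothesis wf0 : forall pi, is_policy pi -> forall j a, (0 <= wf pi j a)%R.
Hypothesis wfm : forall pi, is_policy pi -> Sig S (wf pi) <= 1.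
Hypothesis occR : forall pi x, is_policy pi -> occ M pi h x = dd S K (wf pi) x.
Hypothesis EpR : forall pi g, is_policy pi -> (forall x q, (0 <= q)%R -> 0 <= g x q) ->
  Epush M pi h g = EP S K (wf pi) g.
Hypothesis Kdom : forall (c : R) (mu : X -> R),
  (forall y b x, (Pprev M h y b x <= c * mu x)%R) -> forall j a x, (K j a x <= c * mu x)%R.

Definition oo t x := ocr M (pis t) h x.
Definition Dr t x := (\sum_(1 <= i < t) oo i x)%R.

Lemma pisP t : (1 <= t <= T)%N -> is_policy (pis t).
Proof. by move=> /Hround [/HPi]. Qed.

Lemma oE t x : (1 <= t <= T)%N -> occ M (pis t) h x = (oo t x)%:E /\ (0 <= oo t x <= 1)%R.
Proof. by move=> /pisP Hp; exact: (occE HM h x Hp). Qed.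

Lemma Dr0 t x : (t <= T.+1)%N -> (0 <= Dr t x)%R.
Proof.
move=> tT; rewrite /Dr big_nat_cond; apply: sumr_ge0 => i /andP[/andP[i1 it] _].
have iT : (1 <= i <= T)%N by rewrite i1 -ltnS (leq_trans it).
by case/andP: (proj2 (oE x iT)).
Qed.

Lemma Dr_mono t x : (1 <= t <= T.+1)%N -> (Dr t x <= Dr T.+1 x)%R.
Proof.
move=> /andP[t1 tT]; rewrite /Dr (@big_cat_nat _ _ _ t _ T.+1) //= lerDl.
rewrite big_nat_cond; apply: sumr_ge0 => i /andP[/andP[ti iT] _].
have iT' : (1 <= i <= T)%N by rewrite (leq_trans t1 ti) -ltnS.
by case/andP: (proj2 (oE x iT')).
Qed.

Lemma roundE t x q : (t <= T.+1)%N -> (0 <= q)%R ->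
  round_obj M pis h t x q = (q / (Dr t x + q))%:E.
Proof.
move=> tT q0; rewrite /round_obj.
have -> : \sum_(1 <= i < t) occ M (pis i) h x = (Dr t x)%:E.
  rewrite /Dr -sumEFin; apply: eq_big_nat => i /andP[i1 it].
  have iT : (1 <= i <= T)%N by rewrite i1 -ltnS (leq_trans it).
  by rewrite (proj1 (oE x iT)).
have := Dr0 x tT => D0.
rewrite -EFinD ediv_fin //; first exact: addr_ge0.
move=> e; lra.
Qed.

Lemma round_ge0 t x q : (t <= T.+1)%N -> (0 <= q)%R -> 0 <= round_obj M pis h t x q.
Proof. by move=> tT q0; rewrite roundE // lee_fin frac_ge0 // Dr0. Qed.

Lemma round_up t c mu : (1 <= t <= T)%N -> (0 <= c)%R -> (forall x, (0 <= mu x)%R) ->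
  (forall y b x, (Pprev M h y b x <= c * mu x)%R) ->
  Epush M (pis t) h (round_obj M pis h t) <=
  \esum_(x in [set: X]) (oo t x * (c * mu x / (Dr t x + c * mu x)))%:E.
Proof.
move=> tT c0 mu0 Pc.
have tT1 : (t <= T.+1)%N by case/andP: tT => _ /leqW.
rewrite EpR; first last.
- by move=> x q q0; exact: round_ge0.
- exact: pisP.
apply: le_trans.
  apply: (@EP_upper _ _ _ _ _ _ K0 _ (wf0 (pisP tT)) _
            (fun x => c * mu x / (Dr t x + c * mu x))%R).
  - by move=> x; rewrite frac_ge0 // ?Dr0 // mulr_ge0.
  - by move=> x q q0; exact: round_ge0.
  - move=> j a x Sj; rewrite roundE // lee_fin; apply: frac_mono => //.
    + exact: Dr0.
    + exact: Kdom.
apply: le_esum => x _; rewrite -occR; last exact: pisP.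
by rewrite (proj1 (oE x tT)) -EFinM.
Qed.


Lemma oo_le t c mu x : (1 <= t <= T)%N -> (0 <= c)%R -> (0 <= mu x)%R ->
  (forall y b x, (Pprev M h y b x <= c * mu x)%R) -> (oo t x <= c * mu x)%R.
Proof.
move=> tT c0 mu0 Pc; rewrite -lee_fin -(proj1 (oE x tT)) occR; last exact: pisP.
apply: dd_le; first exact: wf0 (pisP tT).
- exact: wfm (pisP tT).
- exact: mulr_ge0.
- by move=> j a _; exact: Kdom.
Qed.

Lemma pot_sum c mu : (0 <= c)%R -> is_dist mu ->
  (forall y b x, (Pprev M h y b x <= c * mu x)%R) ->
  \sum_(1 <= t < T.+1) \esum_(x in [set: X]) (oo t x * (c * mu x / (Dr t x + c * mu x)))%:E
    <= (2 * c * ln (1 + T%:R))%:E.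
Proof.
move=> c0 [mu0 mu1] Pc.
have tm0 t x : (1 <= t < T.+1)%N -> (0 <= oo t x * (c * mu x / (Dr t x + c * mu x)))%R.
  move=> tT; rewrite ltnS in tT; rewrite mulr_ge0 //; first by case/andP: (proj2 (oE x tT)).
  rewrite frac_ge0 ?mulr_ge0 // Dr0 //; by case/andP: tT => _ /leqW.
rewrite big_nat_cond -esum_sum; last by move=> x t _ /andP[tT _]; rewrite lee_fin tm0.
apply: (@le_trans _ _ (\esum_(x in [set: X]) ((2 * c * ln (1 + T%:R)) * mu x)%:E)).
  apply: le_esum => x _; rewrite -big_nat_cond sumEFin lee_fin.
  have := @potential' R (c * mu x) (fun t => oo t x) T (mulr_ge0 c0 (mu0 x)).
  have H : forall t, (0 < t <= T)%N -> (0 <= oo t x <= c * mu x)%R.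
    move=> t tT; rewrite (oo_le tT c0 (mu0 x) Pc) andbT.
    by case/andP: (proj2 (oE x tT)).
  move=> /(_ H) /le_trans; apply.
  by rewrite !mulrA mulrAC.
under eq_esum do rewrite EFinM.
rewrite esumZl; first by rewrite mu1 mule1.
- by rewrite !mulr_ge0 // ln_ge0 // lerDl.
- by move=> x; rewrite lee_fin.
Qed.

Lemma round_total pi c mu : Pi pi -> (0 <= c)%R -> is_dist mu ->
  (forall y b x, (Pprev M h y b x <= c * mu x)%R) ->
  (T%:R)%:E * Epush M pi h (round_obj M pis h T.+1)
    <= (2 * c * ln (1 + T%:R))%:E + (T%:R * eps_opt)%:E.
Proof.
move=> Ppi c0 [mu0 mu1] Pc.
have Hpi := HPi Ppi.
have step t : (1 <= t <= T)%N -> Epush M pi h (round_obj M pis h T.+1) <=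
    Epush M (pis t) h (round_obj M pis h t) + eps_opt%:E.
  move=> tT; have tT1 : (t <= T.+1)%N by case/andP: tT => _ /leqW.
  apply: (@le_trans _ _ (Epush M pi h (round_obj M pis h t))).
    rewrite !EpR //; first last.
    - by move=> x q q0; exact: round_ge0.
    - by move=> x q q0; exact: round_ge0.
    apply: EP_mono; first exact: K0.
    - exact: wf0.
    move=> x q q0; rewrite !roundE // lee_fin; apply: frac_anti => //.
    - exact: Dr0.
    - by apply: Dr_mono; case/andP: tT => -> _.
  rewrite -leeBlDr //; apply: le_trans (proj2 (Hround tT)).
  apply: leeB => //; apply: ereal_sup_ubound; by exists pi.
apply: (@le_trans _ _ (\sum_(1 <= t < T.+1)
          (Epush M (pis t) h (round_obj M pis h t) + eps_opt%:E))).
  set E := Epush M pi h _.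
  have -> : (T%:R)%:E * E = \sum_(1 <= t < T.+1) E.
    by rewrite sumr_const_nat subn1 /= mule_natl.
  by apply: lee_sum_nat' => t; rewrite ltnS => /step.
rewrite big_split /=.
have -> : \sum_(1 <= t < T.+1) eps_opt%:E = (T%:R * eps_opt)%:E.
  by rewrite sumEFin sumr_const_nat subn1 mulr_natl.
rewrite leeD2r //.
apply: le_trans; last exact: (pot_sum c0 (conj mu0 mu1) Pc).
apply: lee_sum_nat' => t; rewrite ltnS => tT.
exact: (round_up tT c0 mu0 Pc).
Qed.

Lemma iota_index : iota 1 T = index_iota 1 T.+1.
Proof. by rewrite /index_iota subn1. Qed.

Lemma dmixE x : dmix M (unif_mix pis T) h x = ((T%:R)^-1 * Dr T.+1 x)%:E.
Proof.
rewrite /dmix /unif_mix big_map /= iota_index /Dr mulr_sumr -sumEFin.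
apply: eq_big_nat => t; rewrite ltnS => tT.
by rewrite (proj1 (oE x tT)) -EFinM.
Qed.

Lemma Tgt0 : (0 < (T%:R : R))%R.
Proof. by rewrite ltr0n. Qed.

Lemma gpushE x q : (0 <= q)%R ->
  q%:E / (dmix M (unif_mix pis T) h x + ((T%:R)^-1 * q)%:E) =
  (T%:R)%:E * round_obj M pis h T.+1 x q.
Proof.
move=> q0; have D0 := Dr0 x (leqnn T.+1).
have Ti0 : (0 < (T%:R : R)^-1)%R by rewrite invr_gt0 Tgt0.
rewrite dmixE roundE // -EFinD ediv_fin //; first last.
- move=> e; have : (0 <= (T%:R : R)^-1 * Dr T.+1 x)%R by rewrite mulr_ge0 // ltW.
  have : (0 <= (T%:R : R)^-1 * q)%R by rewrite mulr_ge0 // ltW.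
  nra.
- by rewrite addr_ge0 // mulr_ge0 // ltW.
rewrite -EFinM; congr (_%:E).
have [e|ne] := eqVneq (Dr T.+1 x + q)%R 0%R.
  have -> : q = 0%R by lra.
  by rewrite !mul0r mulr0.
have Tn0 : (T%:R : R) != 0%R by rewrite gt_eqF // Tgt0.
by field; rewrite Tn0 ne.
Qed.

Lemma psi_push_bound c mu : (0 <= c)%R -> is_dist mu ->
  (forall y b x, (Pprev M h y b x <= c * mu x)%R) ->
  Psi_push M Pi h (T%:R)^-1 (unif_mix pis T) <=
    (2 * c * ln (1 + T%:R) + T%:R * eps_opt)%:E.
Proof.
move=> c0 mud Pc; apply: ge_ereal_sup => _ [pi Ppi <-].
have Hpi := HPi Ppi.
have r0 x q : (0 <= q)%R -> 0 <= round_obj M pis h T.+1 x q by move=> q0; exact: round_ge0.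
rewrite EpR //; last first.
  by move=> x q q0; rewrite gpushE // mule_ge0 ?lee0n ?r0.
rewrite (@EP_ext _ _ _ _ S K K0 (wf pi) (wf0 Hpi) _ (fun x q => (T%:R)%:E * round_obj M pis h T.+1 x q)); last first.
  by move=> x q q0; rewrite gpushE.
rewrite EP_scale //; last exact: wf0.
by rewrite -EpR // EFinD; exact: (round_total Ppi c0 mud Pc).
Qed.

Lemma occa_mix t x a : (1 <= t <= T)%N ->
  occa M (compose (pis t) (@pi_unif R X A) h) h x a = (oo t x * (#|A|%:R)^-1)%:E.
Proof.
move=> tT; rewrite /occa occ_compose // (proj1 (oE x tT)) /compose ltnn /pi_unif.
by rewrite -EFinM.
Qed.

Lemma dmixaE x a : dmixa M (mix_unif_after (unif_mix pis T) h) h x a =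
  ((T%:R)^-1 * (Dr T.+1 x * (#|A|%:R)^-1))%:E.
Proof.
rewrite /dmixa /mix_unif_after /unif_mix -map_comp big_map /= iota_index.
rewrite /Dr mulr_suml mulr_sumr -sumEFin.
apply: eq_big_nat => t; rewrite ltnS => tT.
by rewrite occa_mix // -EFinM.
Qed.

Lemma psi_bound c mu : (0 <= c)%R -> is_dist mu ->
  (forall y b x, (Pprev M h y b x <= c * mu x)%R) ->
  Psi M Pi h (T%:R)^-1 (mix_unif_after (unif_mix pis T) h) <=
    (#|A|%:R * (2 * c * ln (1 + T%:R) + T%:R * eps_opt))%:E.
Proof.
move=> c0 mud Pc; apply: ge_ereal_sup => _ [pi Ppi <-].
have Hpi := HPi Ppi.
set n : R := #|A|%:R.
have n1 : (1 <= n)%R by rewrite /n ler1n; exact: HA.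
have Tg := Tgt0.
set o' := fun x => ocr M pi h x.
have o'E x : occ M pi h x = (o' x)%:E /\ (0 <= o' x <= 1)%R := occE HM h x Hpi.
have D0 x := Dr0 x (leqnn T.+1).
pose Q x := (o' x ^+ 2 / (Dr T.+1 x + o' x))%R.
have Q0 x : (0 <= Q x)%R.
  rewrite /Q divr_ge0 ?sqr_ge0 // addr_ge0 //; by case/andP: (proj2 (o'E x)).
apply: (@le_trans _ _ (\esum_(x in [set: X]) ((T%:R * n) * Q x)%:E)).
  apply: le_esum => x _.
  apply: (@le_trans _ _ (\sum_(a : A) (pi h x a * (T%:R * n * Q x))%:E)).
    apply: lee_sum => a _.
    case/andP: (proj2 (o'E x)) => o0 o1.
    have pb := policy_b h x a Hpi.
    rewrite /occa (proj1 (o'E x)) -EFinM dmixaE -EFinM -EFinD ediv_fin; first last.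
    - move=> e.
      have : (0 <= (T%:R)^-1 * (Dr T.+1 x * n^-1))%R.
        by rewrite !mulr_ge0 // invr_ge0 ?ler0n // ltW.
      have : (0 <= (T%:R)^-1 * (o' x * pi h x a))%R.
        by rewrite !mulr_ge0 // ?invr_ge0 ?ler0n //; case/andP: pb.
      move=> h1 h2.
      have h3 : ((T%:R)^-1 * (o' x * pi h x a) = 0)%R by lra.
      move: h3 => /eqP; rewrite mulf_eq0 invr_eq0 gt_eqF //= => /eqP //.
    - by rewrite addr_ge0 // !mulr_ge0 // ?invr_ge0 ?ler0n //; case/andP: pb.
    - by rewrite mulr_ge0 //; case/andP: pb.
    rewrite -EFinM lee_fin; exact: psi_term.
  rewrite sumEFin -mulr_suml (proj2 (Hpi h x)) mul1r lexx //.
under eq_esum do rewrite EFinM.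
rewrite esumZl; first last.
- by move=> x; rewrite lee_fin.
- by rewrite mulr_ge0 // ?ler0n // ltW.
have EQ : \esum_(x in [set: X]) (Q x)%:E <= Epush M pi h (round_obj M pis h T.+1).
  rewrite EpR //; last by move=> x q q0; exact: round_ge0.
  rewrite EPswap //; first last.
  - by move=> x q q0; exact: round_ge0.
  - exact: wf0.
  apply: le_esum => x _.
  have ddE : dd S K (wf pi) x = (o' x)%:E by rewrite -occR // (proj1 (o'E x)).
  have := @jensen _ _ _ _ S K K0 (wf pi) (wf0 Hpi) (wfm Hpi) x (Dr T.+1 x) (D0 x).
  rewrite ddE /= => /(_ isT) /le_trans; apply.
  rewrite /Sig; apply: le_esum => j _; apply: lee_sum => a _.
  by rewrite roundE // -EFinM.
apply: (@le_trans _ _ ((T%:R * n)%:E * Epush M pi h (round_obj M pis h T.+1))).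
  by apply: lee_wpmul2l => //; rewrite lee_fin mulr_ge0 // ?ler0n // ltW.
rewrite mulrC EFinM -muleA EFinM; apply: lee_wpmul2l; first by rewrite lee_fin ler0n.
rewrite EFinD; exact: (round_total Ppi c0 mud Pc).
Qed.

Lemma conclude : 0 <= Cpush M h ->
  eps_opt%:E <= Cpush M h * ((T%:R)^-1 * ln (2 / (T%:R)^-1))%:E ->
  Psi_push M Pi h (T%:R)^-1 (unif_mix pis T) <= (5 * ln (2 / (T%:R)^-1))%:E * Cpush M h /\
  Psi M Pi h (T%:R)^-1 (mix_unif_after (unif_mix pis T) h)
    <= (5 * #|A|%:R * ln (2 / (T%:R)^-1))%:E * Cpush M h.
Proof.
move=> C0 Heps; split.
  rewrite -[X in (X * _)%R]mulr1.
  apply: (@final_step _ _ _ M h T eps_opt HT HM _ 1%R).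
  - by [].
  - move=> c mu c0 mud Pc; rewrite mul1r; exact: (psi_push_bound c0 mud Pc).
  - exact: Heps.
  - exact: C0.
apply: (@final_step _ _ _ M h T eps_opt HT HM _ (#|A|%:R)).
- by rewrite ler1n.
- move=> c mu c0 mud Pc; exact: (psi_bound c0 mud Pc).
- exact: Heps.
- exact: C0.
Qed.
End Main.
Section Supp.
Variables (R : realType) (X : countType) (A : finType).

Lemma supp_ex (pis : nat -> policy R X A) T pi : supp (unif_mix pis T) pi ->
  exists t, (1 <= t <= T)%N /\ pis t = pi.
Proof.
rewrite /supp /= /unif_mix big_map /= => pos.
apply: contrapT => nex; move: pos; rewrite big1_seq ?ltxx // => t /andP[_].
rewrite mem_iota add1n ltnS => tT.
case: asboolP => // e; exfalso; apply: nex; by exists t.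
Qed.

Lemma supp_sub (Pi : set (policy R X A)) pis T :
  (forall t, (1 <= t <= T)%N -> Pi (pis t)) -> supp (unif_mix pis T) `<=` Pi.
Proof. by move=> H pi /supp_ex [t [tT <-]]; exact: H. Qed.

Lemma supp_card (pis : nat -> policy R X A) T :
  (supp (unif_mix pis T) #<= [set: 'I_T])%card.
Proof.
apply: (@card_le_trans _ _ _ ((fun i : 'I_T => pis i.+1) @` [set: 'I_T])).
  apply: subset_card_le => pi /supp_ex [t [/andP[t1 tT] <-]].
  have tT' : (t.-1 < T)%N by rewrite prednK.
  exists (Ordinal tT') => //=; by rewrite prednK.
exact: card_image_le.
Qed.

End Supp.

Unset Implicit Arguments.

Theorem theorem4p5 (R : realType) (X : countType) (A : finType)
  (M : mdp R X A) (H h T : nat) (Pi : set (policy R X A))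
  (pis : nat -> policy R X A) (eps_opt : R) :
  is_mdp M ->
  (0 < #|A|)%N ->
  (forall pi, Pi pi -> is_policy pi) ->
  (1 <= h <= H)%N ->
  (1 <= T)%N ->
  let eps : R := ((T%:R)^-1)%R in
  (forall t, (1 <= t <= T)%N ->
     Pi (pis t) /\
     Epush M (pis t) h (round_obj M pis h t) >=
       ereal_sup [set Epush M pi h (round_obj M pis h t) | pi in Pi] - eps_opt%:E) ->
  eps_opt%:E <= Cpush M h * (eps * ln (2 / eps))%:E ->
  let p := unif_mix pis T in
  supp p `<=` Pi /\
  (supp p #<= [set: 'I_T])%card /\
  Psi_push M Pi h eps p <= (5 * ln (2 / eps))%:E * Cpush M h /\
  Psi M Pi h eps (mix_unif_after p h) <= (5 * #|A|%:R * ln (2 / eps))%:E * Cpush M h.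
Proof.
move=> HM HA HPi /andP[h1 hH] HT eps Hround Heps p.
have [x0 _] : exists x0 : X, True.
  apply: contrapT => nx; case: HM => -[_ i1] _.
  have e : [set: X] = set0.
    by apply/seteqP; split => // x _; apply: nx; exists x.
  have : (0 : \bar R) = 1 by rewrite -i1 e esum_set0.
  by case=> /eqP; rewrite eq_sym oner_eq0.
have [a0 _] : exists a0 : A, True by case/card_gt0P: HA => a _; exists a.
have C0 := Cpush_ge0 HM h x0 a0.
split; first by apply: supp_sub => t /Hround [].
split; first exact: supp_card.
move: h1 hH Hround Heps C0; case: h => [//|[|k]] _ _ Hround Heps C0.
- apply: (@conclude R X A M HM 1 T Pi pis eps_opt HPi HT HA Hround unit [set: unit]
            (K1 M) (@w1 R X A)).
  + by move=> j a x; case/andP: (init_b HM x).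
  + by move=> pi _ j a; rewrite invr_ge0 ler0n.
  + by move=> pi _; exact: mass1.
  + by move=> pi x _; exact: occ_rep1.
  + by move=> pi g _ g0; exact: Epush_rep1.
  + by move=> c mu Pc j a x; exact: (Pc x a x).
  + exact: C0.
  + exact: Heps.
- apply: (@conclude R X A M HM k.+2 T Pi pis eps_opt HPi HT HA Hround X [set: X]
            (KSS M k) (wSS M k)).
  + by move=> j a x; case/andP: (trans_b HM k.+1 j a x).
  + by move=> pi Hpi; exact: wSS0.
  + by move=> pi Hpi; exact: massSS.
  + by move=> pi x Hpi; exact: occ_repSS.
  + by move=> pi g Hpi _; exact: Epush_repSS.
  + by move=> c mu Pc j a x; exact: (Pc j a x).
  + exact: C0.
  + exact: Heps.
Qed.
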